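(* In the public bug bounty model described in the context, with fixed prizes $\boldsymbol v$, $v_a$ and complexity $q_a$, let $c_n$ be the symmetric equilibrium threshold with $n$ agents and $\kappa^*$ the largest fixed point in $[0,\infty)$ of $\Psi_\infty(\hat\kappa)=\sum_lv^l\mu^l\frac{1-e^{-q^l\hat\kappa}}{\underline c}+v_a\frac{1-e^{-q_a\hat\kappa}}{\underline c}$. Then $$W_n(c_n)\to W_\infty(\kappa^* )=\sum_lw^l\mu^l\big(1-e^{-q^l\kappa^*}\big)-\kappa^*\underline c\quad\text{as }n\to\infty,$$ where $W_n(\hat c)=\sum_lw^l\mu^l\big(1-(1-q^lF(\hat c))^n\big)-nF(\hat c)\hat c$.
   Context: Bug bounty model with $n$ agents, analysed as $n\to\infty$. There are $L$ potential organic bugs; bug $l$ exists with probability $\mu^l\in(0,1]$ (independently), has complexity $q^l\in(0,1]$, and the designer values it at $w^l\ge0$. Agents' private search costs are i.i.d. from a fixed distribution $F$ with support $[\underline c,\overline c]$, $0<\underline c<\overline c\le\infty$, continuous with full support, finite density $f$, $F/f$ non-decreasing. Budget $\overline v>0$ with $\overline v\ge\underline c$, and $\sum_lw^l\mu^lq^l\ge\underline c$. Prizes $v^l\ge0$ and one artificial bug (existing with certainty) with prize $v_a\ge0$ and complexity $q_a\in[0,1]$, $\sum_lv^l+v_a\le\overline v$. A searching agent (paying his/her cost) finds each existing bug of complexity $q$ with probability $q$, independently; a found bug's prize goes to one of its finders chosen uniformly at random. With $n$ agents, $\Phi_n(\hat c;q)$ is the probability that a searching agent wins the prize of an existing bug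 of complexity $q$ when each of the other $n-1$ agents searches iff his/her cost is at most $\hat c$; $\Psi_n(\hat c)=\sum_lv^l\mu^l\Phi_n(\hat c;q^l)+v_a\Phi_n(\hat c;q_a)$; the symmetric equilibrium threshold $c_n$ is $\underline c$ if $\Psi_n(\underline c)\le\underline c$, $\overline c$ if $\Psi_n(\overline c)\ge\overline c$, and otherwise the unique solution of $\hat c=\Psi_n(\hat c)$. *)

(* Defs.v *)
From Stdlib Require Import Reals.
From Coquelicot Require Import Coquelicot.
Open Scope R_scope.

Fixpoint sumL (L : nat) (g : nat -> R) : R :=
  match L with
  | O => 0
  | S k => sumL k g + g k
  end.

(* Phi_n(chat; q): probability that a searching agent wins the prize of an
   existing bug of complexity q, when each of the other n-1 agents searches iff
   his/her cost is <= chat (probability F chat), each searcher finds the bug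
   independently with prob. q, and the prize goes to a uniformly chosen finder.
   = P(agent finds) * E[ 1/(1+K) ],  K ~ Binomial(n-1, q F(chat)). *)
Definition Phi (F : R -> R) (n : nat) (chat q : R) : R :=
  let p := q * F chat in
  q * sumL n (fun k => Binomial.C (n - 1)%nat k * p ^ k * (1 - p) ^ (n - 1 - k)%nat / INR (k + 1)).

Definition Psi (F : R -> R) (L : nat) (mu q v : nat -> R) (va qa : R)
  (n : nat) (chat : R) : R :=
  sumL L (fun l => v l * mu l * Phi F n chat (q l)) + va * Phi F n chat qa.

Definition Psi_inf (clo : R) (L : nat) (mu q v : nat -> R) (va qa : R)
  (kappa : R) : R :=
  sumL L (fun l => v l * mu l * (1 - exp (- (q l * kappa))) / clo)
  + va * (1 - exp (- (qa * kappa))) / clo.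

Definition W (F : R -> R) (L : nat) (mu q w : nat -> R) (n : nat) (chat : R) : R :=
  sumL L (fun l => w l * mu l * (1 - (1 - q l * F chat) ^ n))
  - INR n * F chat * chat.

Definition W_inf (clo : R) (L : nat) (mu q w : nat -> R) (kappa : R) : R :=
  sumL L (fun l => w l * mu l * (1 - exp (- (q l * kappa)))) - kappa * clo.

(* Cost distribution F with support [clo, chi] (chi may be +infinity):
   a CDF, continuous, with full support (strictly increasing on the support),
   with a finite density f (F' = f on the interior, f > 0 there so that
   F/f is defined), and F/f non-decreasing on the interior of the support. *)
Definition cost_cdf (F f : R -> R) (clo : R) (chi : Rbar) : Prop :=
  0 < clo /\ Rbar_lt (Finite clo) chi /\
  (forall x, 0 <= F x <= 1) /\
  (forall x y, x <= y -> F x <= F y) /\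
  (forall x, continuous F x) /\
  (forall x, x <= clo -> F x = 0) /\
  (forall x, Rbar_le chi (Finite x) -> F x = 1) /\
  is_lim F p_infty 1 /\
  (forall x y, clo <= x -> x < y -> Rbar_le (Finite y) chi -> F x < F y) /\
  (forall x, clo < x -> Rbar_lt (Finite x) chi -> is_derive F x (f x)) /\
  (forall x, clo < x -> Rbar_lt (Finite x) chi -> 0 < f x) /\
  (forall x y, clo < x -> x <= y -> Rbar_lt (Finite y) chi ->
     F x / f x <= F y / f y).

Definition eq_threshold (Psin : R -> R) (clo : R) (chi : Rbar) (c : R) : Prop :=
  (Psin clo <= clo -> c = clo) /\
  (~ (Psin clo <= clo) ->
     match chi with
     | Finite ch =>
         (Psin ch >= ch -> c = ch) /\
         (~ (Psin ch >= ch) -> clo <= c <= ch /\ c = Psin c)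
     | _ => clo <= c /\ c = Psin c
     end).

(* Main.v *)
Require Import Defs.
From Stdlib Require Import Reals Lra Lia FunctionalExtensionality.
From Coquelicot Require Import Coquelicot.
Open Scope R_scope.

Lemma sumL_ext L g h : (forall l, (l < L)%nat -> g l = h l) -> sumL L g = sumL L h.
Proof. induction L; simpl; intros H; [reflexivity|]. rewrite IHL, H; auto. Qed.

Lemma sumL_le L g h : (forall l, (l < L)%nat -> g l <= h l) -> sumL L g <= sumL L h.
Proof. induction L; simpl; intros H; [lra|]. pose proof (H L (Nat.lt_succ_diag_r _)).
  assert (sumL L g <= sumL L h) by auto. lra. Qed.

Lemma sumL_plus L g h : sumL L (fun l => g l + h l) = sumL L g + sumL L h.
Proof. induction L; simpl; [lra|]. rewrite IHL; lra. Qed.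

Lemma sumL_scal L a g : sumL L (fun l => a * g l) = a * sumL L g.
Proof. induction L; simpl; [lra|]. rewrite IHL; lra. Qed.

Lemma sumL_eq_le L g h : (forall l, (l < L)%nat -> g l <= h l) -> sumL L g = sumL L h ->
  forall l, (l < L)%nat -> g l = h l.
Proof. induction L; simpl; intros H E l Hl; [lia|].
  assert (sumL L g <= sumL L h) by (apply sumL_le; auto).
  pose proof (H L (Nat.lt_succ_diag_r _)).
  assert (g L = h L) by lra.
  destruct (Nat.eq_dec l L); [subst; auto|]. apply IHL; auto; lra || lia. Qed.

Lemma sumL_shift n g : sumL (S n) g = g 0%nat + sumL n (fun k => g (S k)).
Proof. induction n; simpl in *; [lra|]. rewrite IHn; lra. Qed.

Lemma sum_f_R0_sumL g n : sum_f_R0 g n = sumL (S n) g.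
Proof. induction n; simpl in *; [lra|]. rewrite IHn; reflexivity. Qed.

Lemma sumL_abs L g : Rabs (sumL L g) <= sumL L (fun l => Rabs (g l)).
Proof. induction L; simpl; [rewrite Rabs_R0; lra|].
  eapply Rle_trans; [apply Rabs_triang|]. lra. Qed.

Lemma binom_shift m k : (k <= m)%nat ->
  INR (S m) * Binomial.C m k / INR (S k) = Binomial.C (S m) (S k).
Proof. intros Hk. unfold Binomial.C.
  replace (S m - S k)%nat with (m - k)%nat by lia.
  change (Factorial.fact (S m)) with (S m * Factorial.fact m)%nat.
  change (Factorial.fact (S k)) with (S k * Factorial.fact k)%nat.
  rewrite !mult_INR. pose proof (INR_fact_neq_0 m). pose proof (INR_fact_neq_0 k).
  pose proof (INR_fact_neq_0 (m-k)). pose proof (pos_INR k). pose proof (pos_INR m).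
  rewrite !S_INR. field. repeat split; lra. Qed.

Lemma Phi_identity F n c q :
  Phi F n c q * (INR n * F c) = 1 - (1 - q * F c) ^ n.
Proof. unfold Phi. set (p := q * F c). destruct n as [|m].
  - simpl. lra.
  - replace (S m - 1)%nat with m by lia.
    transitivity (sumL (S m) (fun k => Binomial.C (S m) (S k) * p ^ (S k) * (1-p)^(S m - S k))).
    + replace (q * _ * (INR (S m) * F c)) with ((INR (S m) * p) * sumL (S m)
         (fun k : nat => Binomial.C m k * p ^ k * (1 - p) ^ (m - k) / INR (k + 1))) by (unfold p; ring).
      rewrite <- sumL_scal.
      apply sumL_ext. intros k Hk. rewrite <- binom_shift by lia.
      replace (m - k)%nat with (S m - S k)%nat by lia. simpl pow.
      pose proof (pos_INR k). rewrite (S_INR k).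
      replace (INR (k+1)) with (INR k + 1) by (rewrite plus_INR; simpl; lra).
      unfold p. field. lra.
    + pose proof (binomial p (1-p) (S m)) as B.
      rewrite sum_f_R0_sumL, sumL_shift in B. rewrite C_n_0 in B.
      replace (p + (1-p)) with 1 in B by ring. rewrite pow1 in B.
      simpl pow in B. simpl pow. lra.
Qed.

Lemma Phi_zero F n c q : F c = 0 -> (1 <= n)%nat -> Phi F n c q = q.
Proof. intros H0 Hn. unfold Phi. rewrite H0, Rmult_0_r.
  destruct n as [|m]; [lia|]. rewrite sumL_shift.
  rewrite (sumL_ext _ _ (fun _ => 0)).
  2:{ intros k _. simpl pow. lra. }
  assert (Z : forall m, sumL m (fun _ => 0) = 0) by (induction m0; simpl; lra).
  rewrite Z. simpl pow. rewrite C_n_0. replace (1-0) with 1 by lra. rewrite pow1.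
  simpl INR. field. Qed.

Lemma Psi_identity F L mu q v va qa n c :
  Psi F L mu q v va qa n c * (INR n * F c) =
  sumL L (fun l => v l * mu l * (1 - (1 - q l * F c) ^ n)) + va * (1 - (1 - qa * F c) ^ n).
Proof. unfold Psi. rewrite Rmult_plus_distr_r. rewrite Rmult_assoc, Phi_identity.
  f_equal. rewrite Rmult_comm, <- sumL_scal. apply sumL_ext. intros l _.
  rewrite <- (Phi_identity F n c (q l)). ring. Qed.

Lemma Psi_zero F L mu q v va qa n c : F c = 0 -> (1 <= n)%nat ->
  Psi F L mu q v va qa n c = sumL L (fun l => v l * mu l * q l) + va * qa.
Proof. intros H Hn. unfold Psi. rewrite Phi_zero by auto. f_equal.
  apply sumL_ext. intros. rewrite Phi_zero; auto. Qed.

Lemma exp_lower x : 1 - x <= exp (- x).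
Proof. pose proof (exp_ineq1_le (-x)). lra. Qed.

Lemma exp_upper t : 0 <= t -> exp (- t) <= 1 - t + t ^ 2.
Proof. intros Ht. pose proof (exp_ineq1_le t). rewrite exp_Ropp.
  assert (0 < 1 + t) by lra.
  apply (Rmult_le_reg_l (exp t)); [apply exp_pos|]. rewrite Rinv_r by (apply Rgt_not_eq, exp_pos).
  apply Rle_trans with ((1+t) * (1 - t + t^2)).
  - nra.
  - apply Rmult_le_compat_r; [nra|lra]. Qed.

Lemma exp_strict x : 0 < x -> 1 - exp (- x) < x.
Proof. intros H. pose proof (exp_ineq1 (-x)). assert (-x <> 0) by lra. specialize (H0 H1). lra. Qed.

Lemma pow_diff a b n : 0 <= a <= 1 -> 0 <= b <= 1 -> Rabs (a ^ n - b ^ n) <= INR n * Rabs (a - b).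
Proof. intros Ha Hb. induction n.
  - simpl. rewrite Rminus_diag, Rabs_R0. lra.
  - replace (a ^ S n - b ^ S n) with (a * (a^n - b^n) + b^n * (a - b)) by (simpl; ring).
    eapply Rle_trans; [apply Rabs_triang|]. rewrite !Rabs_mult.
    rewrite S_INR. rewrite (Rabs_pos_eq a) by lra. rewrite (Rabs_pos_eq (b^n)) by (apply pow_le; lra).
    assert (b ^ n <= 1) by (apply pow_le_1; lra) || (rewrite <- (pow1 n); apply pow_incr; lra).
    pose proof (Rabs_pos (a - b)). pose proof (Rabs_pos (a^n - b^n)).
    assert (a * Rabs (a ^ n - b ^ n) <= Rabs (a ^ n - b ^ n)) by nra. nra. Qed.

Lemma exp_pow_n p n : exp (- p) ^ n = exp (- (INR n * p)).
Proof. induction n.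
  - simpl. rewrite Rmult_0_l, Ropp_0, exp_0. reflexivity.
  - simpl pow. rewrite IHn, <- exp_plus. f_equal. rewrite S_INR. ring. Qed.

Lemma approx_pow p n : 0 <= p <= 1 ->
  Rabs ((1 - p) ^ n - exp (- (INR n * p))) <= INR n * p ^ 2.
Proof. intros Hp. rewrite <- exp_pow_n.
  pose proof (exp_lower p). pose proof (exp_upper p (proj1 Hp)).
  assert (exp (-p) <= 1). { rewrite <- exp_0. apply exp_le_3 || (destruct (Req_dec p 0); [subst; rewrite Ropp_0; lra| left; apply exp_increasing; lra]). }
  pose proof (exp_pos (-p)).
  eapply Rle_trans; [apply pow_diff; lra|].
  apply Rmult_le_compat_l; [apply pos_INR|]. rewrite Rabs_left1 by lra. lra. Qed.

Lemma pow_le_exp p n : 0 <= p <= 1 -> (1 - p) ^ n <= exp (- (INR n * p)).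
Proof. intros Hp. rewrite <- exp_pow_n. apply pow_incr. split; [lra|]. apply exp_lower. Qed.

Lemma exp_lip a b : 0 <= a <= b -> 0 <= exp (- a) - exp (- b) <= b - a.
Proof. intros H. replace (exp (-a) - exp (-b)) with (exp (-a) * (1 - exp (-(b-a)))).
  2:{ rewrite Rmult_minus_distr_l, Rmult_1_r, <- exp_plus. f_equal. f_equal. ring. }
  pose proof (exp_lower (b - a)). assert (exp (-(b-a)) <= 1).
  { rewrite <- exp_0. destruct (Req_dec b a); [replace (b-a) with 0 by lra; rewrite Ropp_0; lra| left; apply exp_increasing; lra]. }
  assert (exp (-a) <= 1).
  { rewrite <- exp_0. destruct (Req_dec a 0); [subst; rewrite Ropp_0; lra| left; apply exp_increasing; lra]. }
  pose proof (exp_pos (-a)). split; nra. Qed.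

Lemma exp_convex t x y : 0 <= t <= 1 -> exp (t * x + (1 - t) * y) <= t * exp x + (1 - t) * exp y.
Proof. intros Ht. set (z := t * x + (1 - t) * y).
  assert (E1 : exp z * (1 + (x - z)) <= exp x).
  { replace (exp x) with (exp z * exp (x - z)) by (rewrite <- exp_plus; f_equal; ring).
    apply Rmult_le_compat_l; [left; apply exp_pos| apply exp_ineq1_le]. }
  assert (E2 : exp z * (1 + (y - z)) <= exp y).
  { replace (exp y) with (exp z * exp (y - z)) by (rewrite <- exp_plus; f_equal; ring).
    apply Rmult_le_compat_l; [left; apply exp_pos| apply exp_ineq1_le]. }
  assert (t * (exp z * (1 + (x - z))) + (1-t) * (exp z * (1 + (y - z))) = exp z) by (unfold z; ring).
  nra. Qed.

Definition concave (h : R -> R) := forall a b t, 0 <= t <= 1 ->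
  t * h a + (1 - t) * h b <= h (t * a + (1 - t) * b).

Lemma chord h a b c : concave h -> a < b < c ->
  h a * (c - b) + h c * (b - a) <= h b * (c - a).
Proof. intros Hc Hb. set (t := (c - b) / (c - a)).
  assert (Ht : 0 <= t <= 1). { unfold t; split.
    - apply Rdiv_le_0_compat; lra.
    - apply Rmult_le_reg_r with (c - a); [lra|]. unfold Rdiv. rewrite Rmult_assoc, Rinv_l by lra. lra. }
  pose proof (Hc a c t Ht).
  replace (t * a + (1 - t) * c) with b in H by (unfold t; field; lra).
  assert (E : h a * (c - b) + h c * (b - a) = (t * h a + (1 - t) * h c) * (c - a)) by (unfold t; field; lra).
  rewrite E. apply Rmult_le_compat_r; lra. Qed.

Lemma abstract_conv (h : R -> R) (ks m : R) (kn : nat -> R) :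
  concave h -> 0 < m -> 0 < h m -> h ks = 0 -> (forall x, ks < x -> h x < 0) ->
  eventually (fun n => m <= kn n) ->
  (forall eta, 0 < eta -> eventually (fun n => Rabs (h (kn n)) < eta)) ->
  is_lim_seq kn ks.
Proof. intros Hc Hm Hhm Hks Hpos Hev Hh.
  assert (mks : m < ks). { destruct (Rlt_le_dec m ks); auto.
    destruct r; [specialize (Hpos m H); lra| subst; lra]. }
  apply is_lim_seq_spec. intros [eps Heps]. simpl.
  assert (Hn : h (ks + eps) < 0) by (apply Hpos; lra).
  set (eta := Rmin (h m * eps / ks) (- h (ks + eps))).
  assert (Heta : 0 < eta). { unfold eta. apply Rmin_glb_lt; [|lra].
    apply Rdiv_lt_0_compat; [nra|lra]. }
  specialize (Hh eta Heta).
  generalize (filter_and _ _ Hev Hh). apply filter_imp. intros n [H1 H2].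
  assert (E1 : eta <= h m * eps / ks) by apply Rmin_l.
  assert (E2 : eta <= - h (ks + eps)) by apply Rmin_r.
  destruct (Rlt_le_dec (Rabs (kn n - ks)) eps) as [Hl|Hl]; auto. exfalso.
  destruct (Rle_lt_dec (kn n) ks) as [Hle|Hgt].
  - rewrite Rabs_left1 in Hl by lra.
    assert (A : h m * eps / ks <= h (kn n)).
    { destruct (Req_dec (kn n) m) as [Em|Em].
      - rewrite Em. apply Rmult_le_reg_r with ks; [lra|]. unfold Rdiv. rewrite Rmult_assoc, Rinv_l by lra. nra.
      - pose proof (chord h m (kn n) ks Hc ltac:(lra)). rewrite Hks in H.
        assert (h m * eps <= h (kn n) * (ks - m)) by nra.
        assert (h (kn n) >= 0) by nra.
        apply Rmult_le_reg_r with ks; [lra|]. unfold Rdiv. rewrite Rmult_assoc, Rinv_l by lra. nra. }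
    pose proof (Rle_abs (h (kn n))). lra.
  - rewrite Rabs_right in Hl by lra.
    assert (A : h (kn n) <= h (ks + eps)).
    { destruct (Req_dec (kn n) (ks + eps)) as [Em|Em]; [rewrite Em; lra|].
      pose proof (chord h ks (ks + eps) (kn n) Hc ltac:(lra)). rewrite Hks in H. nra. }
    pose proof (Rle_abs (- h (kn n))). rewrite Rabs_Ropp in H. lra.
Qed.

Lemma beyond_neg (h : R -> R) (ks B : R) :
  continuity h -> 0 <= ks -> (forall x, 0 <= x -> h x = 0 -> x <= ks) ->
  (forall x, B <= x -> h x < 0) -> forall x, ks < x -> h x < 0.
Proof. intros Hc Hks Hmax HB x Hx.
  destruct (Rlt_le_dec (h x) 0) as [|Hge]; auto. exfalso.
  destruct Hge as [Hp|He].
  - set (y := Rmax B x + 1).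
    assert (Hy : h y < 0) by (apply HB; unfold y; pose proof (Rmax_l B x); lra).
    assert (x < y) by (unfold y; pose proof (Rmax_r B x); lra).
    destruct (IVT (fun z => - h z) x y) as [z [Hz1 Hz2]]; auto.
    + apply continuity_opp; auto.
    + lra.
    + lra.
    + assert (z <= ks) by (apply Hmax; lra). lra.
  - assert (x <= ks) by (apply Hmax; lra). lra.
Qed.

Lemma concave_plus g1 g2 : concave g1 -> concave g2 -> concave (fun k => g1 k + g2 k).
Proof. intros H1 H2 a b t Ht. specialize (H1 a b t Ht). specialize (H2 a b t Ht). lra. Qed.

Lemma concave_sumL L (g : nat -> R -> R) : (forall l, (l < L)%nat -> concave (g l)) ->
  concave (fun k => sumL L (fun l => g l k)).
Proof. induction L; simpl; intros H.
  - intros a b t Ht. lra.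
  - apply (concave_plus (fun k => sumL L (fun l => g l k)) (g L)); auto. Qed.

Lemma concave_exp a b : 0 <= a -> concave (fun k => a * (1 - exp (- (b * k)))).
Proof. intros Ha x y t Ht.
  pose proof (exp_convex t (- (b * x)) (- (b * y)) Ht).
  replace (- (b * (t * x + (1 - t) * y))) with (t * - (b * x) + (1 - t) * - (b * y)) by ring.
  assert (t * (a * (1 - exp (- (b * x)))) + (1 - t) * (a * (1 - exp (- (b * y)))) =
     a * (1 - (t * exp (- (b * x)) + (1 - t) * exp (- (b * y))))) by ring.
  rewrite H0. apply Rmult_le_compat_l; lra. Qed.

Lemma concave_lin a : concave (fun k => - (a * k)).
Proof. intros x y t Ht. lra. Qed.

Lemma ex_derive_sumL L (g : nat -> R -> R) x : (forall l, ex_derive (g l) x) ->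
  ex_derive (fun k => sumL L (fun l => g l k)) x.
Proof. induction L; simpl; intros H.
  - apply ex_derive_const.
  - apply (ex_derive_plus (fun k => sumL L (fun l => g l k)) (g L)); auto. Qed.

Definition Gt (L : nat) (mu q v : nat -> R) (va qa : R) (k : R) : R :=
  sumL L (fun l => v l * mu l * (1 - exp (- (q l * k)))) + va * (1 - exp (- (qa * k))).

Definition hh clo L mu q v va qa k := Gt L mu q v va qa k + - (clo * k).

Lemma hh_concave clo L mu q v va qa : 0 <= va ->
  (forall l, (l < L)%nat -> 0 <= v l * mu l) -> concave (hh clo L mu q v va qa).
Proof. intros Hva Hv. unfold hh, Gt.
  apply (concave_plus (fun k => sumL L _ + _) (fun k => - (clo * k))); [|apply concave_lin].
  apply (concave_plus (fun k => sumL L _) (fun k => va * _)); [|apply concave_exp; auto].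
  apply (concave_sumL L (fun l k => v l * mu l * (1 - exp (- (q l * k))))).
  intros l Hl. apply concave_exp; auto. Qed.

Lemma ex_derive_exp_term a b x : ex_derive (fun k => a * (1 - exp (- (b * k)))) x.
Proof. auto_derive. auto. Qed.

Lemma hh_continuity clo L mu q v va qa : continuity (hh clo L mu q v va qa).
Proof. intros x. apply continuity_pt_filterlim. apply (ex_derive_continuous (K:=R_AbsRing) (V:=R_NormedModule)).
  unfold hh, Gt.
  apply (ex_derive_plus (fun k => sumL L _ + _) (fun k => - (clo * k))); [|auto_derive; auto].
  apply (ex_derive_plus (fun k => sumL L _) (fun k => va * _)); [|apply ex_derive_exp_term].
  apply (ex_derive_sumL L (fun l k => v l * mu l * (1 - exp (- (q l * k))))).
  intros l. apply ex_derive_exp_term. Qed.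

Lemma sumL_continuity L (g : nat -> R -> R) x : (forall l, ex_derive (g l) x) ->
  continuity_pt (fun k => sumL L (fun l => g l k)) x.
Proof. intros H. apply continuity_pt_filterlim. apply (ex_derive_continuous (K:=R_AbsRing) (V:=R_NormedModule)).
  apply ex_derive_sumL; auto. Qed.

Lemma Psi_inf_Gt clo L mu q v va qa k : clo <> 0 ->
  Psi_inf clo L mu q v va qa k = Gt L mu q v va qa k / clo.
Proof. intros H. unfold Psi_inf, Gt. unfold Rdiv. rewrite Rmult_plus_distr_r. f_equal.
  - rewrite Rmult_comm, <- sumL_scal. apply sumL_ext. intros. ring.
  Qed.

Lemma Gt_upper L mu q v va qa k :
  (forall l, (l < L)%nat -> 0 <= v l * mu l /\ 0 <= q l) -> 0 <= va -> 0 <= qa -> 0 <= k ->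
  Gt L mu q v va qa k <= (sumL L (fun l => v l * mu l * q l) + va * qa) * k.
Proof. intros Hl Hva Hqa Hk. unfold Gt. rewrite Rmult_plus_distr_r.
  apply Rplus_le_compat.
  - rewrite Rmult_comm, <- sumL_scal. apply sumL_le. intros l Hl'.
    pose proof (exp_lower (q l * k)). destruct (Hl l Hl'). nra.
  - pose proof (exp_lower (qa * k)). nra. Qed.

Lemma Gt_lower L mu q v va qa k :
  (forall l, (l < L)%nat -> 0 <= v l * mu l /\ 0 <= q l <= 1) -> 0 <= va -> 0 <= qa <= 1 -> 0 <= k ->
  (sumL L (fun l => v l * mu l * q l) + va * qa) * (k - k ^ 2) <= Gt L mu q v va qa k.
Proof. intros Hl Hva Hqa Hk. unfold Gt. rewrite Rmult_plus_distr_r.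
  apply Rplus_le_compat.
  - rewrite Rmult_comm, <- sumL_scal. apply sumL_le. intros l Hl'. destruct (Hl l Hl').
    pose proof (exp_upper (q l * k) ltac:(nra)).
    assert (q l * q l * (k * k) <= q l * (k * k)) by (apply Rmult_le_compat_r; nra).
    assert (q l * (k - k^2) <= 1 - exp (- (q l * k))) by (simpl pow in *; nra).
    assert (0 <= v l * mu l * (1 - exp (- (q l * k)) - q l * (k - k ^ 2))) by (apply Rmult_le_pos; lra).
    nra.
  - pose proof (exp_upper (qa * k) ltac:(nra)).
    assert (qa * qa * (k * k) <= qa * (k * k)) by (apply Rmult_le_compat_r; nra).
    assert (qa * (k - k^2) <= 1 - exp (- (qa * k))) by (simpl pow in *; nra).
    assert (0 <= va * (1 - exp (- (qa * k)) - qa * (k - k ^ 2))) by (apply Rmult_le_pos; lra).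
    nra. Qed.

Lemma Gt_bound L mu q v va qa k :
  (forall l, (l < L)%nat -> 0 <= v l * mu l /\ 0 <= q l) -> 0 <= va -> 0 <= qa -> 0 <= k ->
  Gt L mu q v va qa k <= sumL L (fun l => v l * mu l) + va.
Proof. intros Hl Hva Hqa Hk. unfold Gt. apply Rplus_le_compat.
  - apply sumL_le. intros l Hl'. destruct (Hl l Hl'). pose proof (exp_pos (- (q l * k))). nra.
  - pose proof (exp_pos (- (qa * k))). nra. Qed.

Definition Gs (L : nat) (mu q v : nat -> R) (va qa : R) (n : nat) (x : R) : R :=
  sumL L (fun l => v l * mu l * (1 - (1 - q l * x) ^ n)) + va * (1 - (1 - qa * x) ^ n).

Lemma pow01 y n : 0 <= y <= 1 -> 0 <= y ^ n <= 1.
Proof. intros H. split; [apply pow_le; lra|]. rewrite <- (pow1 n). apply pow_incr. lra. Qed.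

Lemma Gs_bound L mu q v va qa n x :
  (forall l, (l < L)%nat -> 0 <= v l * mu l /\ 0 <= q l <= 1) -> 0 <= va -> 0 <= qa <= 1 -> 0 <= x <= 1 ->
  0 <= Gs L mu q v va qa n x <= sumL L (fun l => v l * mu l) + va.
Proof. intros Hl Hva Hqa Hx. unfold Gs. split.
  - replace 0 with (sumL L (fun _ => 0) + 0).
    2:{ assert (Z : forall m, sumL m (fun _ => 0) = 0) by (induction m; simpl; lra). rewrite Z; lra. }
    apply Rplus_le_compat.
    + apply sumL_le. intros l Hl'. destruct (Hl l Hl'). pose proof (pow01 (1 - q l * x) n ltac:(nra)). nra.
    + pose proof (pow01 (1 - qa * x) n ltac:(nra)). nra.
  - apply Rplus_le_compat.
    + apply sumL_le. intros l Hl'. destruct (Hl l Hl'). pose proof (pow01 (1 - q l * x) n ltac:(nra)). nra.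
    + pose proof (pow01 (1 - qa * x) n ltac:(nra)). nra. Qed.

Lemma Gs_ge_Gt L mu q v va qa n x :
  (forall l, (l < L)%nat -> 0 <= v l * mu l /\ 0 <= q l <= 1) -> 0 <= va -> 0 <= qa <= 1 -> 0 <= x <= 1 ->
  Gt L mu q v va qa (INR n * x) <= Gs L mu q v va qa n x.
Proof. intros Hl Hva Hqa Hx. unfold Gs, Gt. apply Rplus_le_compat.
  - apply sumL_le. intros l Hl'. destruct (Hl l Hl').
    pose proof (pow_le_exp (q l * x) n ltac:(nra)).
    replace (INR n * (q l * x)) with (q l * (INR n * x)) in H1 by ring. nra.
  - pose proof (pow_le_exp (qa * x) n ltac:(nra)).
    replace (INR n * (qa * x)) with (qa * (INR n * x)) in H by ring. nra. Qed.

Lemma Gs_approx L mu q v va qa n x :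
  (forall l, (l < L)%nat -> 0 <= v l * mu l /\ 0 <= q l <= 1) -> 0 <= va -> 0 <= qa <= 1 -> 0 <= x <= 1 ->
  Rabs (Gs L mu q v va qa n x - Gt L mu q v va qa (INR n * x)) <=
    (sumL L (fun l => v l * mu l) + va) * (INR n * x ^ 2).
Proof. intros Hl Hva Hqa Hx. unfold Gs, Gt.
  assert (Hn : 0 <= INR n * x ^ 2) by (apply Rmult_le_pos; [apply pos_INR| apply pow2_ge_0]).
  assert (key : forall a b, 0 <= a -> 0 <= b <= 1 ->
    Rabs (a * (1 - (1 - b * x) ^ n) - a * (1 - exp (- (b * (INR n * x))))) <= a * (INR n * x ^ 2)).
  { intros a b Ha Hb. pose proof (approx_pow (b * x) n ltac:(nra)).
    replace (INR n * (b * x)) with (b * (INR n * x)) in H by ring.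
    replace (a * (1 - (1 - b * x) ^ n) - a * (1 - exp (- (b * (INR n * x)))))
      with (- (a * ((1 - b * x) ^ n - exp (- (b * (INR n * x)))))) by ring.
    rewrite Rabs_Ropp, Rabs_mult, (Rabs_pos_eq a) by lra. apply Rmult_le_compat_l; auto.
    eapply Rle_trans; [apply H|]. apply Rmult_le_compat_l; [apply pos_INR|].
    assert (b * b <= 1) by nra. assert (0 <= x * x) by nra. simpl. nra. }
  replace (sumL L (fun l => v l * mu l * (1 - (1 - q l * x) ^ n)) + va * (1 - (1 - qa * x) ^ n) -
   (sumL L (fun l => v l * mu l * (1 - exp (- (q l * (INR n * x))))) + va * (1 - exp (- (qa * (INR n * x))))))
   with (sumL L (fun l => v l * mu l * (1 - (1 - q l * x) ^ n) - v l * mu l * (1 - exp (- (q l * (INR n * x)))))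
      + (va * (1 - (1 - qa * x) ^ n) - va * (1 - exp (- (qa * (INR n * x)))))).
  2:{ assert (forall (g h : nat -> R), sumL L (fun l => g l - h l) = sumL L g - sumL L h).
      { intros g h. clear. induction L; simpl; [ring|]. rewrite IHL. ring. }
      rewrite H. ring. }
  eapply Rle_trans; [apply Rabs_triang|]. rewrite Rmult_plus_distr_r. apply Rplus_le_compat.
  - eapply Rle_trans; [apply sumL_abs|]. rewrite (Rmult_comm (sumL L (fun l => v l * mu l))), <- sumL_scal.
    apply sumL_le. intros l Hl'. destruct (Hl l Hl'). eapply Rle_trans; [apply key; auto| right; ring].
  - apply key; auto. Qed.

Lemma sumL_zero L : sumL L (fun _ => 0) = 0.
Proof. induction L; simpl; lra. Qed.

Lemma sumL_nonneg L g : (forall l, (l < L)%nat -> 0 <= g l) -> 0 <= sumL L g.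
Proof. intros H. rewrite <- (sumL_zero L). apply sumL_le. auto. Qed.

Lemma archi C a : 0 < a -> exists N, forall n, (N <= n)%nat -> (1 <= n)%nat /\ C < a * INR n.
Proof. intros Ha. assert (H0 : 0 <= Rabs C / a) by (apply Rdiv_le_0_compat; [apply Rabs_pos|lra]).
  destruct (nfloor_ex _ H0) as [N [_ HN]]. exists (S N). intros n Hn. split; [lia|].
  apply le_INR in Hn. rewrite S_INR in Hn.
  assert (Rabs C < a * INR n).
  { apply Rmult_lt_reg_r with (/ a); [apply Rinv_0_lt_compat; lra|].
    replace (a * INR n * / a) with (INR n) by (field; lra). unfold Rdiv in HN. lra. }
  pose proof (Rle_abs C). lra. Qed.

Lemma Gt_continuity L mu q v va qa : continuity (Gt L mu q v va qa).
Proof. intros x. apply continuity_pt_filterlim.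
  apply (ex_derive_continuous (K:=R_AbsRing) (V:=R_NormedModule)).
  unfold Gt.
  apply (ex_derive_plus (fun k => sumL L _) (fun k => va * _)); [|apply ex_derive_exp_term].
  apply (ex_derive_sumL L (fun l k => v l * mu l * (1 - exp (- (q l * k))))).
  intros l. apply ex_derive_exp_term. Qed.

Theorem corollary1
  (F f : R -> R) (clo : R) (chi : Rbar)
  (L : nat) (mu q w v : nat -> R) (va qa vbar : R)
  (c : nat -> R) (kstar : R) :
  cost_cdf F f clo chi ->
  (forall l, (l < L)%nat ->
     0 < mu l <= 1 /\ 0 < q l <= 1 /\ 0 <= w l /\ 0 <= v l) ->
  0 <= va -> 0 <= qa <= 1 ->
  0 < vbar -> clo <= vbar ->
  sumL L v + va <= vbar ->
  clo <= sumL L (fun l => w l * mu l * q l) ->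
  (* c n is the symmetric equilibrium threshold with n agents *)
  (forall n, (1 <= n)%nat -> eq_threshold (Psi F L mu q v va qa n) clo chi (c n)) ->
  (* kstar is the largest fixed point of Psi_inf in [0, oo) *)
  0 <= kstar -> Psi_inf clo L mu q v va qa kstar = kstar ->
  (forall k, 0 <= k -> Psi_inf clo L mu q v va qa k = k -> k <= kstar) ->
  is_lim_seq (fun n => W F L mu q w n (c n)) (W_inf clo L mu q w kstar).
Proof.
  intros Hcdf Hl Hva Hqa Hvbar Hclovbar Hsum Hw Heq Hks0 Hksfix Hksmax.
  destruct Hcdf as (Hclo & Hchi & F01 & Fmono & Fcont & Flo & Fhi & Flim & Fstrict & _ & _ & _).
  assert (F0 : F clo = 0) by (apply Flo; lra).
  assert (Fpos : forall y, clo < y -> 0 < F y).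
  { intros y Hy. destruct chi as [ch| |]; simpl in Hchi.
    - set (y' := Rmin y ch). assert (clo < y') by (apply Rmin_glb_lt; lra).
      assert (F clo < F y') by (apply Fstrict; [lra|lra|simpl; apply Rmin_r]).
      assert (F y' <= F y) by (apply Fmono, Rmin_l). lra.
    - assert (F clo < F y) by (apply Fstrict; [lra|lra|simpl; auto]). lra.
    - contradiction. }
  assert (Hl' : forall l, (l < L)%nat -> 0 <= v l * mu l /\ 0 <= q l <= 1).
  { intros l H; destruct (Hl l H) as [[? ?] [[? ?] [? ?]]]; split; [apply Rmult_le_pos|]; lra. }
  assert (Hlw : forall l, (l < L)%nat -> 0 <= w l * mu l /\ 0 <= q l <= 1).
  { intros l H; destruct (Hl l H) as [[? ?] [[? ?] [? ?]]]; split; [apply Rmult_le_pos|]; lra. }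
  assert (Hl'' : forall l, (l < L)%nat -> 0 <= v l * mu l /\ 0 <= q l).
  { intros l H; destruct (Hl' l H); split; lra. }
  assert (Hvm : sumL L (fun l => v l * mu l) + va <= vbar).
  { assert (sumL L (fun l => v l * mu l) <= sumL L v).
    { apply sumL_le; intros l H; destruct (Hl l H) as [[? ?] [_ [_ ?]]]; nra. } lra. }
  set (S := sumL L (fun l => v l * mu l * q l) + va * qa).
  assert (HS0 : 0 <= S).
  { unfold S. assert (0 <= sumL L (fun l => v l * mu l * q l)).
    { apply sumL_nonneg. intros l H. destruct (Hl' l H). nra. } nra. }
  assert (HPsiclo : forall n, (1 <= n)%nat -> Psi F L mu q v va qa n clo = S)
    by (intros; apply Psi_zero; auto).
  assert (Hfix : forall k, Psi_inf clo L mu q v va qa k = k -> hh clo L mu q v va qa k = 0).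
  { intros k Hk. rewrite Psi_inf_Gt in Hk by lra. unfold hh.
    apply (f_equal (fun z => z * clo)) in Hk. unfold Rdiv in Hk.
    rewrite Rmult_assoc, Rinv_l, Rmult_1_r in Hk by lra. lra. }
  assert (Hfix' : forall k, hh clo L mu q v va qa k = 0 -> Psi_inf clo L mu q v va qa k = k).
  { intros k Hk. rewrite Psi_inf_Gt by lra. unfold hh in Hk. field_simplify; [|lra].
    replace (Gt L mu q v va qa k) with (clo * k) by lra. field. lra. }
  destruct (Rle_lt_dec S clo) as [HSle|HSgt].
  -
    assert (Hk0 : kstar = 0).
    { destruct (Req_dec kstar 0) as [|Hne]; auto. exfalso. assert (kp : 0 < kstar) by lra.
      specialize (Hfix _ Hksfix). unfold hh in Hfix.
      pose proof (Gt_upper L mu q v va qa kstar Hl'' Hva (proj1 Hqa) Hks0) as HU.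
      fold S in HU.
      assert (HSe : S = clo) by nra.
      unfold Gt in Hfix, HU. unfold S in HU, HSe.
      rewrite Rmult_plus_distr_r, (Rmult_comm (sumL L (fun l => v l * mu l * q l)) kstar), <- sumL_scal in HU.
      set (g := fun l => v l * mu l * (1 - exp (- (q l * kstar)))) in *.
      set (g2 := fun l => kstar * (v l * mu l * q l)) in *.
      assert (Hg : forall l, (l < L)%nat -> g l <= g2 l).
      { intros l H. unfold g, g2. destruct (Hl' l H). pose proof (exp_lower (q l * kstar)). nra. }
      assert (Hva' : va * (1 - exp (- (qa * kstar))) <= va * qa * kstar).
      { pose proof (exp_lower (qa * kstar)). nra. }
      assert (sumL L g <= sumL L g2) by (apply sumL_le; auto).
      assert (Hsumeq : sumL L g = sumL L g2).
      { assert (E : sumL L g2 = kstar * sumL L (fun l => v l * mu l * q l)) by (unfold g2; apply sumL_scal).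
        assert (kstar * sumL L (fun l => v l * mu l * q l) + va * qa * kstar = clo * kstar) by (rewrite <- HSe; ring).
        lra. }
      assert (Hvaeq : va * (1 - exp (- (qa * kstar))) = va * qa * kstar).
      { assert (E : sumL L g2 = kstar * sumL L (fun l => v l * mu l * q l)) by (unfold g2; apply sumL_scal).
        assert (kstar * sumL L (fun l => v l * mu l * q l) + va * qa * kstar = clo * kstar) by (rewrite <- HSe; ring).
        lra. }
      pose proof (sumL_eq_le L g g2 Hg Hsumeq) as Hall.
      assert (Hz : sumL L (fun l => v l * mu l * q l) = 0).
      { rewrite <- (sumL_zero L). apply sumL_ext. intros l Hlt. specialize (Hall l Hlt).
        unfold g, g2 in Hall. destruct (Hl l Hlt) as [[? ?] [[? ?] [? ?]]].
        pose proof (exp_strict (q l * kstar) ltac:(nra)).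
        assert (v l * mu l = 0) by nra. nra. }
      assert (Hz2 : va * qa = 0).
      { destruct (Req_dec qa 0) as [->|Hq]; [ring|].
        pose proof (exp_strict (qa * kstar) ltac:(nra)).
        assert (va = 0) by nra. subst. ring. }
      rewrite Hz, Hz2 in HSe. lra. }
    subst kstar.
    replace (W_inf clo L mu q w 0) with 0.
    2:{ unfold W_inf. rewrite (sumL_ext _ _ (fun _ => 0)); [rewrite sumL_zero; ring|].
        intros l _. rewrite Rmult_0_r, Ropp_0, exp_0. ring. }
    apply is_lim_seq_ext_loc with (fun _ => 0); [|apply is_lim_seq_const].
    exists 1%nat. intros n Hn.
    destruct (Heq n Hn) as [H1 _].
    rewrite H1 by (rewrite HPsiclo; auto).
    unfold W. rewrite F0. rewrite (sumL_ext _ _ (fun _ => 0)); [rewrite sumL_zero; ring|].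
    intros l _. rewrite Rmult_0_r, Rminus_0_r, pow1. ring.
  -
    set (K := vbar / clo).
    assert (HK : 0 < K) by (unfold K; apply Rdiv_lt_0_compat; lra).
    destruct (archi vbar clo Hclo) as [N0 HN0].
    assert (Hfp : forall n, (N0 <= n)%nat -> clo <= c n /\ c n = Psi F L mu q v va qa n (c n)).
    { intros n Hn. destruct (HN0 n Hn) as [H1n Hbig].
      destruct (Heq n H1n) as [_ H2].
      assert (Hn1 : ~ Psi F L mu q v va qa n clo <= clo) by (rewrite HPsiclo; auto; lra).
      specialize (H2 Hn1).
      destruct chi as [ch| |].
      - destruct H2 as [H3 H4]. simpl in Hchi.
        destruct (Rge_dec (Psi F L mu q v va qa n ch) ch) as [Hge|Hlt].
        + exfalso. assert (Fch : F ch = 1) by (apply Fhi; simpl; lra).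
          pose proof (Psi_identity F L mu q v va qa n ch) as PI.
          pose proof (Gs_bound L mu q v va qa n (F ch) Hl' Hva Hqa ltac:(lra)) as GB.
          unfold Gs in GB. rewrite <- PI, Fch in GB.
          pose proof (pos_INR n). nra.
        + specialize (H4 Hlt). lra.
      - exact H2.
      - simpl in Hchi. contradiction. }
    set (kn := fun n => INR n * F (c n)).
    assert (Hkn : forall n, (N0 <= n)%nat ->
      c n * kn n = Gs L mu q v va qa n (F (c n)) /\ 0 <= kn n <= K).
    { intros n Hn. destruct (Hfp n Hn) as [Hc1 Hc2].
      assert (E : c n * kn n = Gs L mu q v va qa n (F (c n))).
      { unfold kn, Gs. rewrite <- Psi_identity. rewrite <- Hc2. reflexivity. }
      split; auto.
      pose proof (Gs_bound L mu q v va qa n (F (c n)) Hl' Hva Hqa (F01 _)) as GB.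
      assert (0 <= kn n) by (unfold kn; apply Rmult_le_pos; [apply pos_INR| apply F01]).
      split; auto.
      assert (clo * kn n <= vbar) by nra.
      unfold K. apply Rmult_le_reg_l with clo; [lra|].
      replace (clo * (vbar / clo)) with vbar by (field; lra). lra. }
    assert (Hcev : forall d, 0 < d -> eventually (fun n => c n < clo + d)).
    { intros d Hd. pose proof (Fpos (clo + d) ltac:(lra)) as Fa.
      destruct (archi K (F (clo + d)) Fa) as [N1 HN1].
      exists (Nat.max N0 N1). intros n Hn.
      destruct (HN1 n ltac:(lia)) as [_ HB]. destruct (Hkn n ltac:(lia)) as [_ [_ HkK]].
      destruct (Rlt_le_dec (c n) (clo + d)) as [|Hge]; auto. exfalso.
      assert (F (clo + d) <= F (c n)) by (apply Fmono; auto).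
      unfold kn in HkK. pose proof (pos_INR n). nra. }
    assert (Hclim : is_lim_seq c clo).
    { apply is_lim_seq_spec. intros [eps Heps]. simpl.
      destruct (Hcev eps Heps) as [N1 HN1]. exists (Nat.max N0 N1). intros n Hn.
      specialize (HN1 n ltac:(lia)). destruct (Hfp n ltac:(lia)) as [Hc1 _].
      rewrite Rabs_right by lra. lra. }
    assert (HSpos : 0 < S) by lra.
    set (m := (S - clo) / (2 * S)).
    assert (Hm0 : 0 < m) by (unfold m; apply Rdiv_lt_0_compat; lra).
    assert (HSm : S * m = (S - clo) / 2) by (unfold m; field; lra).
    assert (Hmev : eventually (fun n => m <= kn n)).
    { destruct (Hcev ((S - clo) / 2) ltac:(lra)) as [N1 HN1].
      exists (Nat.max N0 N1). intros n Hn.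
      specialize (HN1 n ltac:(lia)). destruct (Hfp n ltac:(lia)) as [Hc1 Hc2].
      destruct (Hkn n ltac:(lia)) as [E [Hk0 HkK]].
      destruct (HN0 n ltac:(lia)) as [H1n _].
      destruct (Req_dec (kn n) 0) as [Hz|Hnz].
      - exfalso. assert (INR n > 0) by (apply lt_0_INR; lia).
        unfold kn in Hz. assert (Fz : F (c n) = 0).
        { destruct (Rmult_integral _ _ Hz); [lra|auto]. }
        assert (c n <= clo).
        { destruct (Rle_lt_dec (c n) clo); auto. pose proof (Fpos _ r). lra. }
        assert (c n = clo) by lra. rewrite H1 in Hc2. rewrite HPsiclo in Hc2 by auto. lra.
      - assert (Hkp : 0 < kn n) by lra.
        pose proof (Gs_ge_Gt L mu q v va qa n (F (c n)) Hl' Hva Hqa (F01 _)) as G1.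
        pose proof (Gt_lower L mu q v va qa (kn n) Hl' Hva Hqa Hk0) as G2.
        fold S in G2. unfold kn in G1, G2. fold (kn n) in G1, G2.
        assert (c n * kn n >= S * (kn n - kn n ^ 2)) by lra.
        assert (c n >= S * (1 - kn n)).
        { destruct (Rlt_le_dec (c n) (S * (1 - kn n))) as [Hlt|]; [exfalso|lra].
          assert (c n * kn n < S * (1 - kn n) * kn n) by (apply Rmult_lt_compat_r; lra).
          simpl in *. nra. }
        assert (S * kn n >= S * m) by nra.
        apply Rmult_le_reg_l with S; lra. }
    assert (Hsq : forall C eta, 0 <= C -> 0 < eta ->
       eventually (fun n => C * (INR n * F (c n) ^ 2) < eta)).
    { intros C eta HC Heta.
      destruct (archi (C * K ^ 2) eta Heta) as [N1 HN1].
      exists (Nat.max N0 N1). intros n Hn.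
      destruct (HN1 n ltac:(lia)) as [H1n HB].
      destruct (Hkn n ltac:(lia)) as [_ [Hk0 HkK]].
      assert (Hnp : 0 < INR n) by (apply lt_0_INR; lia).
      assert (kn n ^ 2 <= K ^ 2) by (apply pow_incr; lra).
      assert (Hkk : INR n * (INR n * F (c n) ^ 2) = kn n ^ 2) by (unfold kn; ring).
      apply Rmult_lt_reg_l with (INR n); [lra|].
      replace (INR n * (C * (INR n * F (c n) ^ 2))) with (C * kn n ^ 2) by (rewrite <- Hkk; ring).
      assert (C * kn n ^ 2 <= C * K ^ 2) by (apply Rmult_le_compat_l; lra).
      lra. }
    assert (Hhev : forall eta, 0 < eta -> eventually (fun n => Rabs (hh clo L mu q v va qa (kn n)) < eta)).
    { intros eta Heta.
      destruct (Hsq vbar (eta / 2) ltac:(lra) ltac:(lra)) as [N1 HN1].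
      destruct (Hcev (eta / (2 * (K + 1))) ltac:(apply Rdiv_lt_0_compat; lra)) as [N2 HN2].
      exists (Nat.max N0 (Nat.max N1 N2)). intros n Hn.
      specialize (HN1 n ltac:(lia)). specialize (HN2 n ltac:(lia)).
      destruct (Hfp n ltac:(lia)) as [Hc1 _].
      destruct (Hkn n ltac:(lia)) as [E [Hk0 HkK]].
      pose proof (Gs_approx L mu q v va qa n (F (c n)) Hl' Hva Hqa (F01 _)) as GA.
      fold (kn n) in GA. unfold hh.
      replace (Gt L mu q v va qa (kn n) + - (clo * kn n)) with
        (- (Gs L mu q v va qa n (F (c n)) - Gt L mu q v va qa (kn n)) + (c n - clo) * kn n) by (rewrite <- E; ring).
      eapply Rle_lt_trans; [apply Rabs_triang|]. rewrite Rabs_Ropp.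
      assert (0 <= INR n * F (c n) ^ 2) by (apply Rmult_le_pos; [apply pos_INR| apply pow2_ge_0]).
      assert (Rabs (Gs L mu q v va qa n (F (c n)) - Gt L mu q v va qa (kn n)) < eta / 2) by nra.
      rewrite (Rabs_pos_eq ((c n - clo) * kn n)) by (apply Rmult_le_pos; lra).
      assert ((c n - clo) * (K + 1) < eta / 2).
      { apply Rmult_lt_reg_r with (/ (K + 1)); [apply Rinv_0_lt_compat; lra|].
        replace ((c n - clo) * (K + 1) * / (K + 1)) with (c n - clo) by (field; lra).
        replace (eta / 2 * / (K + 1)) with (eta / (2 * (K + 1))) by (field; lra). lra. }
      nra. }
    assert (Hhm : 0 < hh clo L mu q v va qa m).
    { unfold hh. pose proof (Gt_lower L mu q v va qa m Hl' Hva Hqa ltac:(lra)) as G2. fold S in G2.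
      assert (S * (m - m ^ 2) - clo * m = m * ((S - clo) / 2)) by (simpl; nra).
      assert (0 < m * ((S - clo) / 2)) by (apply Rmult_lt_0_compat; lra). lra. }
    assert (Hbeyond : forall x, kstar < x -> hh clo L mu q v va qa x < 0).
    { apply (beyond_neg _ kstar ((vbar + 1) / clo)).
      - unfold hh. intros x. apply continuity_plus; [apply Gt_continuity|].
        apply continuity_opp. apply continuity_scal. apply derivable_continuous, derivable_id.
      - auto.
      - intros x Hx Hz. apply Hksmax; auto.
      - intros x Hx. unfold hh.
        assert (0 <= x) by (eapply Rle_trans; [|apply Hx]; apply Rdiv_le_0_compat; lra).
        pose proof (Gt_bound L mu q v va qa x Hl'' Hva (proj1 Hqa) H).
        assert (vbar + 1 <= clo * x).
        { apply Rmult_le_reg_r with (/ clo); [apply Rinv_0_lt_compat; lra|].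
          replace (clo * x * / clo) with x by (field; lra). exact Hx. }
        lra. }
    assert (Hklim : is_lim_seq kn kstar).
    { apply (abstract_conv (hh clo L mu q v va qa) kstar m kn); auto.
      apply hh_concave; auto. intros l Hlt; apply Hl'; auto. }
    set (Dn := fun n => Gs L mu q w 0 0 n (F (c n)) - Gt L mu q w 0 0 (kn n)).
    assert (HD : is_lim_seq Dn 0).
    { apply is_lim_seq_spec. intros [eps Heps]. simpl.
      assert (HW0 : 0 <= sumL L (fun l => w l * mu l) + 0).
      { assert (0 <= sumL L (fun l => w l * mu l)) by (apply sumL_nonneg; intros l H; apply Hlw; auto). lra. }
      destruct (Hsq _ eps HW0 Heps) as [N1 HN1]. exists N1. intros n Hn.
      rewrite Rminus_0_r. unfold Dn.
      pose proof (Gs_approx L mu q w 0 0 n (F (c n)) Hlw (Rle_refl 0) ltac:(lra) (F01 _)) as GA.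
      fold (kn n) in GA. specialize (HN1 n Hn). lra. }
    assert (HG : is_lim_seq (fun n => Gt L mu q w 0 0 (kn n)) (Gt L mu q w 0 0 kstar)).
    { apply is_lim_seq_continuous; auto. apply Gt_continuity. }
    assert (HM : is_lim_seq (fun n => kn n * c n) (kstar * clo)) by (apply is_lim_seq_mult'; auto).
    apply is_lim_seq_ext_loc with (fun n => Dn n + Gt L mu q w 0 0 (kn n) - kn n * c n).
    + exists 0%nat. intros n _. unfold Dn, W, Gs, kn. ring.
    + replace (W_inf clo L mu q w kstar) with (0 + Gt L mu q w 0 0 kstar - kstar * clo)
        by (unfold W_inf, Gt; ring).
      apply is_lim_seq_minus'; auto. apply is_lim_seq_plus'; auto.
Qed.
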